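(* Let $p$ be an odd prime and let $B$ be the $p\times p$ matrix over $\mathbb{F}_p$ with rows and columns indexed by $0,1,\dots,p-1$, defined by $B(s,s)=0$ and $B(s,t)=(s-t)^{-1}$ for $s\neq t$. Then $\operatorname{rank}(B)=p-1$. *)

(* Defs.v *)
From mathcomp Require Import all_boot all_algebra.
Set Implicit Arguments. Unset Strict Implicit. Unset Printing Implicit Defensive.
Import GRing.Theory.
Local Open Scope ring_scope.

Definition Bmx (p : nat) : 'M['F_p]_p :=
  \matrix_(s < p, t < p)
     (if s == t then 0 else ((s : nat)%:R - (t : nat)%:R)^-1).

(* Main.v *)
Require Import Defs.
From mathcomp Require Import all_boot all_algebra.
From mathcomp Require Import all_field ring zify.

Set Implicit Arguments. Unset Strict Implicit. Unset Printing Implicit Defensive.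
Import GRing.Theory.
Local Open Scope ring_scope.

Section Aux.
Variable p : nat.
Hypothesis hp : prime p.
Hypothesis hodd : odd p.

Local Notation F := 'F_p.
Definition aa (s : 'I_p) : F := (s : nat)%:R.

Lemma p_ge3 : (2 < p)%N.
Proof.
have := prime_gt1 hp; case: p hodd => [|[|[|q]]] //.
Qed.

Lemma charF : p \in [pchar F].
Proof. exact: pchar_Fp. Qed.

Lemma natF0 (m : nat) : ((m%:R : F) == 0) = (p %| m)%N.
Proof. by rewrite (dvdn_pcharf charF). Qed.

Lemma aa_inj : injective aa.
Proof.
move=> s t; rewrite /aa => est; apply/val_inj => /=.
have hs := ltn_ord s; have ht := ltn_ord t.
case: (ltngtP s t) => // lst.
- have : ((t - s)%N%:R : F) == 0 by rewrite natrB ?est ?subrr // ltnW.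
  rewrite natF0 => /dvdn_leq; rewrite subn_gt0 lst => /(_ isT); lia.
- have : ((s - t)%N%:R : F) == 0 by rewrite natrB ?est ?subrr // ltnW.
  rewrite natF0 => /dvdn_leq; rewrite subn_gt0 lst => /(_ isT); lia.
Qed.

Lemma aa_bij : bijective aa.
Proof. apply: (@inj_card_bij _ _ aa aa_inj); by rewrite card_Fp // card_ord. Qed.

Lemma fermat (x : F) : x != 0 -> x ^+ p.-1 = 1.
Proof.
move=> xnz; apply: (mulIf xnz); rewrite mul1r -exprSr prednK ?prime_gt0 //.
by have := expf_card x; rewrite card_Fp.
Qed.

Lemma invE (x : F) : x^-1 = x ^+ p.-2.
Proof.
have h3 := p_ge3.
have [->|xnz] := eqVneq x 0; first by rewrite invr0 expr0n; case: (p.-2) (ltac:(lia) : (0 < p.-2)%N).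
apply: (mulIf xnz); rewrite mulVf // -exprSr.
have -> : p.-2.+1 = p.-1 by lia.
by rewrite fermat.
Qed.

Lemma fact_ndvd n : (n < p)%N -> ~~ (p %| n`!)%N.
Proof.
elim: n => [|n IH] ltn; first by rewrite fact0 dvdn1; have := prime_gt1 hp; case: (p) => [|[|]].
rewrite factS Euclid_dvdM // negb_or IH ?(ltnW ltn) // andbT.
apply/negP => /(dvdn_leq (ltn0Sn _)); lia.
Qed.

Lemma bin_nz n k : (n < p)%N -> (k <= n)%N -> ('C(n, k)%:R : F) != 0.
Proof.
move=> ltn lek; rewrite natF0; apply/negP => hd.
have := fact_ndvd ltn; rewrite -(bin_fact lek).
by rewrite dvdn_mulr.
Qed.

Lemma two_nz : (2%:R : F) != 0.
Proof.
rewrite natF0; apply/negP => /(dvdn_leq (ltn0Sn 1)) le2.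
have := p_ge3; lia.
Qed.

Lemma BE s t : Bmx p s t = (aa s - aa t)^-1.
Proof.
rewrite /Bmx mxE; case: eqP => [->|//]; by rewrite subrr invr0.
Qed.

Lemma sum_inv (b : F) : \sum_(x : F) (x - b)^-1 = 0.
Proof.
rewrite (reindex_inj (addIr b)) /=.
under eq_bigr do rewrite addrK.
have hS : \sum_(x : F) x^-1 = - \sum_(x : F) x^-1.
  rewrite [LHS](reindex_inj oppr_inj) /= -sumrN.
  by apply: eq_bigr => x _; rewrite invrN.
move: hS; set S := \sum_x _ => hS.
have : S *+ 2 = 0 by rewrite mulr2n {1}hS addNr.
rewrite -mulr_natr => /eqP; rewrite mulf_eq0 (negPf two_nz) orbF => /eqP //.
Qed.

Lemma onesK : (const_mx 1 : 'rV[F]_p) *m Bmx p = 0.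
Proof.
apply/rowP => t; rewrite !mxE.
under eq_bigr do rewrite mxE mul1r BE.
have [g ag ga] := aa_bij.
apply: eq_trans (sum_inv (aa t)).
by rewrite [RHS](reindex aa); last by exists g => x _; [exact: ag | exact: ga].
Qed.

Lemma kerK (u : 'rV[F]_p) : u *m Bmx p = 0 -> exists c, u = c *: const_mx 1.
Proof.
move=> hu.
have h3 := p_ge3.
set n := p.-2.
set M := fun j => \sum_(s < p) u 0 s * aa s ^+ j.
have hyp t : \sum_(s < p) u 0 s * (aa s - aa t) ^+ n = 0.
  have := congr1 (fun m : 'rV[F]_p => m 0 t) hu; rewrite !mxE => h; rewrite -[RHS]h.
  by apply: eq_bigr => s _; rewrite BE invE.
set c := fun k => (-1) ^+ k * 'C(n, k)%:R * M (n - k)%N.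
set q : {poly F} := \poly_(k < n.+1) c k.
have qE x : q.[x] = \sum_(s < p) u 0 s * (aa s - x) ^+ n.
  rewrite horner_poly.
  under [RHS]eq_bigr do rewrite exprDn mulr_sumr.
  rewrite exchange_big /=; apply: eq_bigr => k _.
  rewrite /c /M mulr_sumr mulr_suml; apply: eq_bigr => s _.
  rewrite [(- x) ^+ k]exprNn !mulr_natr; ring.
have q0 : q = 0.
  apply: (@roots_geq_poly_eq0 _ _ (map aa (enum 'I_p))).
  - by apply/allP => x /mapP [t _ ->]; rewrite /root qE hyp.
  - by rewrite map_inj_uniq ?enum_uniq //; exact: aa_inj.
  - rewrite size_map size_enum_ord; apply: leq_trans (size_poly _ _) _; lia.
have M0 j : (j <= n)%N -> M j = 0.
  move=> ljn; have := congr1 (fun r : {poly F} => r`_(n - j)) q0.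
  rewrite coef_poly coef0 ifT; last by lia.
  rewrite /c subKn // => /eqP; rewrite !mulf_eq0 signr_eq0 /=.
  rewrite (negPf (bin_nz _ _)) ?leq_subr //; last by lia.
  by move/eqP.
exists (- M p.-1); apply/rowP => r; rewrite !mxE mulr1.
have e1 : \sum_(s < p) u 0 s * (aa s - aa r) ^+ p.-1 = \sum_(s < p) u 0 s - u 0 r.
  rewrite (bigD1 r) //= [X in _ = X - _](bigD1 r) //= subrr expr0n.
  have -> : p.-1 == 0%N = false by apply/negP => /eqP; lia.
  rewrite mulr0 add0r addrAC subrr add0r; apply: eq_bigr => s hs.
  rewrite fermat ?mulr1 // subr_eq0; apply/negP => /eqP /aa_inj /eqP.
  by rewrite (negPf hs).
have e2 : \sum_(s < p) u 0 s * (aa s - aa r) ^+ p.-1 = M p.-1.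
  under eq_bigr do rewrite exprDn mulr_sumr.
  rewrite exchange_big /= big_ord_recl /= [X in _ + X]big1 ?addr0.
    rewrite /M; apply: eq_bigr => s _; rewrite subn0 expr0 mulr1 bin0 mulr1n //.
  move=> i _; rewrite /bump /=.
  rewrite (_ : \sum_(s < p) _ = (- aa r) ^+ i.+1 *+ 'C(p.-1, i.+1) * M (p.-1 - i.+1)%N).
    by rewrite M0 ?mulr0 //; lia.
  rewrite /M mulr_sumr; apply: eq_bigr => s _; rewrite add1n mulrnAr mulrnAl; congr (_ *+ _).
  by rewrite [RHS]mulrC -mulrA.
have hM0 : M 0%N = \sum_(s < p) u 0 s by apply: eq_bigr => s _; rewrite expr0 mulr1.
rewrite M0 // in hM0.
move: e1; rewrite e2 -hM0 sub0r => ->; by rewrite opprK.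
Qed.

End Aux.

Theorem lemma2p11 (p : nat) (hp : prime p) (hodd : odd p) :
  \rank (Bmx p) = p.-1.
Proof.
have hk : \rank (kermx (Bmx p)) = 1%N.
  apply/eqP; rewrite eqn_leq; apply/andP; split.
  - apply: leq_trans (rank_leq_row (const_mx 1 : 'rV['F_p]_p)).
    apply: mxrankS; apply/row_subP => i.
    have : row i (kermx (Bmx p)) *m Bmx p = 0 by rewrite -row_mul mulmx_ker row0.
    move/(kerK hp hodd) => [c ->]; apply/sub_rVP; by exists c.
  - have : ((const_mx 1 : 'rV['F_p]_p) <= kermx (Bmx p))%MS by rewrite sub_kermx onesK.
    move/mxrankS; apply: leq_trans; rewrite rank_rV.
    have i0 : 'I_p := Ordinal (prime_gt0 hp).
    case: eqP => // /rowP /(_ i0); rewrite !mxE => /eqP; by rewrite oner_eq0.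
rewrite mxrank_ker in hk.
have := rank_leq_row (Bmx p); lia.
Qed.
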